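(* Let $R$ be a ring with identity and $a\in R$. Then: (i) there exists a positive integer $n$ such that $a$ is left $(a^n,1)$-invertible if and only if $a$ is left $\pi$-regular; (ii) there exists a positive integer $n$ such that $a$ is right $(1,a^n)$-invertible if and only if $a$ is right $\pi$-regular; (iii) $a$ is strongly $\pi$-regular (equivalently, Drazin invertible) if and only if there exists a positive integer $n$ such that $a$ is left $(a^n,1)$-invertible and right $(1,a^n)$-invertible.
   Context: For $x\in R$: $xR=\{xr:r\in R\}$, $Rx=\{rx:r\in R\}$. For $a,b,c\in R$, $a$ is left $(b,c)$-invertible if there is $y$ with $Ry\subseteq Rc$ and $yab=b$; right $(b,c)$-invertible if there is $y$ with $yR\subseteq bR$ and $cay=c$. The element $a$ is left (resp. right) $\pi$-regular if there exist $x\in R$ and a positive integer $n$ with $a^n=xa^{n+1}$ (resp. $a^n=a^{n+1}x$); it is strongly $\pi$-regular if it is both left and right $\pi$-regular. *)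

(* Defs.v *)
From mathcomp Require Import all_boot all_algebra.
Set Implicit Arguments. Unset Strict Implicit. Unset Printing Implicit Defensive.
Import GRing.Theory.
Local Open Scope ring_scope.

Definition left_principal_sub (R : pzRingType) (x c : R) : Prop :=
  forall r : R, exists s : R, r * x = s * c.
Definition right_principal_sub (R : pzRingType) (x b : R) : Prop :=
  forall r : R, exists s : R, x * r = b * s.

Definition left_bc_invertible (R : pzRingType) (a b c : R) : Prop :=
  exists y : R, left_principal_sub y c /\ y * a * b = b.
Definition right_bc_invertible (R : pzRingType) (a b c : R) : Prop :=
  exists y : R, right_principal_sub y b /\ c * a * y = c.

Definition left_pi_regular (R : pzRingType) (a : R) : Prop :=
  exists (x : R) (n : nat), (0 < n)%N /\ a ^+ n = x * a ^+ n.+1.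
Definition right_pi_regular (R : pzRingType) (a : R) : Prop :=
  exists (x : R) (n : nat), (0 < n)%N /\ a ^+ n = a ^+ n.+1 * x.
Definition strongly_pi_regular (R : pzRingType) (a : R) : Prop :=
  left_pi_regular a /\ right_pi_regular a.

(* Main.v *)
Require Import Defs.
From mathcomp Require Import all_boot all_algebra.
Local Open Scope ring_scope.
Import GRing.Theory.

Lemma lpr_up (R : pzRingType) (a x : R) n k :
  a ^+ n = x * a ^+ n.+1 -> a ^+ (n + k) = x * a ^+ (n + k).+1.
Proof. by move=> H; rewrite exprD H -mulrA -exprD addSn. Qed.

Lemma rpr_up (R : pzRingType) (a x : R) n k :
  a ^+ n = a ^+ n.+1 * x -> a ^+ (k + n) = a ^+ (k + n).+1 * x.
Proof. by move=> H; rewrite exprD H mulrA -exprD addnS. Qed.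

Lemma li (R : pzRingType) (a : R) n :
  left_bc_invertible a (a ^+ n) 1 <-> exists x, a ^+ n = x * a ^+ n.+1.
Proof.
split.
- by move=> [y [_ H]]; exists y; rewrite -{1}H -mulrA -exprS.
- move=> [x H]; exists x; split.
  + by move=> r; exists (r * x); rewrite mulr1.
  + by rewrite -mulrA -exprS -H.
Qed.

Lemma ri (R : pzRingType) (a : R) n :
  right_bc_invertible a 1 (a ^+ n) <-> exists x, a ^+ n = a ^+ n.+1 * x.
Proof.
split.
- by move=> [y [_ H]]; exists y; rewrite -{1}H -exprSr.
- move=> [x H]; exists x; split.
  + by move=> r; exists (x * r); rewrite mul1r.
  + by rewrite -exprSr -H.
Qed.

Theorem proposition2p18 (R : pzRingType) (a : R) :
  ((exists n : nat, (0 < n)%N /\ left_bc_invertible a (a ^+ n) 1)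
     <-> left_pi_regular a)
  /\ ((exists n : nat, (0 < n)%N /\ right_bc_invertible a 1 (a ^+ n))
     <-> right_pi_regular a)
  /\ (strongly_pi_regular a <->
      exists n : nat, (0 < n)%N /\ left_bc_invertible a (a ^+ n) 1
                               /\ right_bc_invertible a 1 (a ^+ n)).
Proof.
split; [|split].
- split.
  + by move=> [n [Hn /li [x H]]]; exists x, n.
  + by move=> [x [n [Hn H]]]; exists n; split=> //; apply/li; exists x.
- split.
  + by move=> [n [Hn /ri [x H]]]; exists x, n.
  + by move=> [x [n [Hn H]]]; exists n; split=> //; apply/ri; exists x.
- split.
  + move=> [[x [n [Hn H]]] [y [m [Hm K]]]].
    exists (n + m)%N; split; first by rewrite addn_gt0 Hn.
    split; first by apply/li; exists x; apply: lpr_up.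
    by apply/ri; exists y; have := @rpr_up _ a y m n K; rewrite (addnC n m).
  + move=> [n [Hn [/li [x H] /ri [y K]]]]; split.
    * by exists x, n.
    * by exists y, n.
Qed.
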